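(* Every pseudospectral SBP operator has the eigenvalue property: if $D_+,D_-$ form a pair of SBP operators of order $q=n$ on $[a,b]$ with associated data $H,S,\mathbf{p}_0,\mathbf{p}_n,\mathbf{x}$ (where $\mathbf{x}\in\mathbb{R}^{n+1}$), then every eigenvalue of $\tilde D_+ = D_+ + H^{-1}\mathbf{p}_0\mathbf{p}_0^\top$ has strictly positive real part.
   Context: Let $[a,b]$ be an interval with $b>a$ and $n\ge 1$. For $\mathbf{x}\in\mathbb{R}^{n+1}$, $\mathbf{x}^j$ denotes elementwise exponentiation, with $\mathbf{x}^0=\mathbf{1}=(1,\dots,1)^\top$. Matrices $D_+, D_-\in\mathbb{R}^{(n+1)\times(n+1)}$ form a pair of SBP (summation-by-parts) operators of order $q\ge 1$ on $[a,b]$ if there exist matrices $H,S\in\mathbb{R}^{(n+1)\times(n+1)}$ and vectors $\mathbf{p}_0,\mathbf{p}_n,\mathbf{x}\in\mathbb{R}^{n+1}$ such that: (A) $D_\pm \mathbf{x}^j = j\mathbf{x}^{j-1}$, $\mathbf{p}_0^\top\mathbf{x}^j = a^j$, $\mathbf{p}_n^\top \mathbf{x}^j = b^j$ for $j=0,\dots,q$ (with $0\cdot\mathbf{x}^{-1}:=\mathbf{0}$); (B) $H=H^\top$ is positive definite; (C) $HD_+ + D_+^\top H = -\mathbf{p}_0\mathbf{p}_0^\top + \mathbf{p}_n\mathbf{p}_n^\top + S$ with $S=S^\top$ positive semidefinite; (D) $HD_+ + D_-^\top H = -\mathbf{p}_0\mathbf{p}_0^\top + \mathbf{p}_n\mathbf{p}_n^\top$;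 (E) $\mathbf{x}=(x_0,\dots,x_n)^\top$ with $x_i\ne x_j$ for $i\ne j$. A pseudospectral SBP operator is a pair of SBP operators of order $q=n$ (i.e. the order equals the number of nodes minus one). The SBP operator has the eigenvalue property if every eigenvalue of $\tilde D_+ := D_+ + H^{-1}\mathbf{p}_0\mathbf{p}_0^\top$ has strictly positive real part. *)

(* Defs.v *)
From mathcomp Require Import all_boot all_order all_algebra.
From mathcomp Require Import reals.
From mathcomp.real_closed Require Import complex.
Set Implicit Arguments.
Unset Strict Implicit.
Unset Printing Implicit Defensive.
Import Order.TTheory GRing.Theory Num.Theory.
Local Open Scope ring_scope.

Definition xpow (R : pzRingType) (m : nat) (x : 'cV[R]_m) (j : nat) : 'cV[R]_m :=
  \col_i (x i 0 ^+ j).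

Definition posdef (R : realFieldType) (m : nat) (A : 'M[R]_m) : Prop :=
  A^T = A /\ forall v : 'cV[R]_m, v != 0 -> 0 < (v^T *m A *m v) 0 0.

Definition possemidef (R : realFieldType) (m : nat) (A : 'M[R]_m) : Prop :=
  A^T = A /\ forall v : 'cV[R]_m, 0 <= (v^T *m A *m v) 0 0.

Definition SBP_pair (R : realFieldType) (n : nat) (a b : R) (q : nat)
    (Dp Dm H S : 'M[R]_n.+1) (p0 pn x : 'cV[R]_n.+1) : Prop :=
  [/\ (forall j, (j <= q)%N ->
         [/\ Dp *m xpow x j = j%:R *: xpow x j.-1,
             Dm *m xpow x j = j%:R *: xpow x j.-1,
             p0^T *m xpow x j = (a ^+ j)%:M &
             pn^T *m xpow x j = (b ^+ j)%:M]),
      posdef H,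
      H *m Dp + Dp^T *m H = - (p0 *m p0^T) + pn *m pn^T + S /\ possemidef S,
      H *m Dp + Dm^T *m H = - (p0 *m p0^T) + pn *m pn^T &
      (forall i j : 'I_n.+1, i != j -> x i 0 != x j 0)].

Definition complexify (R : rcfType) (m : nat) (A : 'M[R]_m) : 'M[R[i]]_m :=
  map_mx (fun r => (r%:C)%C) A.

Definition eigenvalue_property (R : rcfType) (n : nat)
    (Dp H : 'M[R]_n.+1) (p0 : 'cV[R]_n.+1) : Prop :=
  forall lam : R[i],
    eigenvalue (complexify (Dp + invmx H *m (p0 *m p0^T))) lam -> 0 < Re lam.

(* Main.v *)
Require Import Defs.
From mathcomp Require Import all_boot all_order all_algebra.
From mathcomp Require Import reals.
From mathcomp.real_closed Require Import complex.
From mathcomp Require Import zify.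
From mathcomp Require Import lra.
Set Implicit Arguments. Unset Strict Implicit. Unset Printing Implicit Defensive.
Import Order.TTheory GRing.Theory Num.Theory.
Local Open Scope ring_scope.

Local Notation Re := complex.Re.
Local Notation Im := complex.Im.
Section Cx.
Variable R : rcfType.
Definition cx m n (A : 'M[R]_(m,n)) : 'M[R[i]]_(m,n) := map_mx (real_complex R) A.
Lemma complexifyE m (A : 'M[R]_m) : complexify A = cx A. Proof. by []. Qed.
Lemma ReD (x y : R[i]) : Re (x + y) = Re x + Re y. Proof. by case: x; case: y. Qed.
Lemma ImD (x y : R[i]) : Im (x + y) = Im x + Im y. Proof. by case: x; case: y. Qed.
Lemma Re0 : Re (0 : R[i]) = 0. Proof. by []. Qed.
Lemma Im0 : Im (0 : R[i]) = 0. Proof. by []. Qed.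
Lemma Re_rmul (r : R) (z : R[i]) : Re ((r%:C)%C * z) = r * Re z.
Proof. by case: z => a b /=; rewrite mul0r subr0. Qed.
Lemma Im_rmul (r : R) (z : R[i]) : Im ((r%:C)%C * z) = r * Im z.
Proof. by case: z => a b /=; rewrite mul0r addr0. Qed.
Lemma Re_mul m n p (A : 'M[R]_(m,n)) (v : 'M[R[i]]_(n,p)) :
  map_mx (@complex.Re R) (cx A *m v) = A *m map_mx (@complex.Re R) v.
Proof.
apply/matrixP=> i j; rewrite !mxE (big_morph _ ReD Re0).
by apply: eq_bigr => k _; rewrite !mxE Re_rmul.
Qed.
Lemma Im_mul m n p (A : 'M[R]_(m,n)) (v : 'M[R[i]]_(n,p)) :
  map_mx (@complex.Im R) (cx A *m v) = A *m map_mx (@complex.Im R) v.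
Proof.
apply/matrixP=> i j; rewrite !mxE (big_morph _ ImD Im0).
by apply: eq_bigr => k _; rewrite !mxE Im_rmul.
Qed.
Lemma Re_scale m n (lam : R[i]) (v : 'M[R[i]]_(m,n)) :
  map_mx (@complex.Re R) (lam *: v) = Re lam *: map_mx (@complex.Re R) v - Im lam *: map_mx (@complex.Im R) v.
Proof. by apply/matrixP=> i j; rewrite !mxE; case: lam; case: (v i j). Qed.
Lemma Im_scale m n (lam : R[i]) (v : 'M[R[i]]_(m,n)) :
  map_mx (@complex.Im R) (lam *: v) = Im lam *: map_mx (@complex.Re R) v + Re lam *: map_mx (@complex.Im R) v.
Proof. by apply/matrixP=> i j; rewrite !mxE; case: lam; case: (v i j) => a b c d /=; rewrite addrC mulrC [d * _]mulrC. Qed.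
Lemma mx_eq0_ReIm m n (v : 'M[R[i]]_(m,n)) :
  map_mx (@complex.Re R) v = 0 -> map_mx (@complex.Im R) v = 0 -> v = 0.
Proof.
move=> /matrixP hr /matrixP hi; apply/matrixP => i j.
have := hr i j; have := hi i j; rewrite !mxE; case: (v i j) => a b /= -> ->. by [].
Qed.
Lemma cxM m n p (A : 'M[R]_(m,n)) (B : 'M[R]_(n,p)) : cx (A *m B) = cx A *m cx B.
Proof. exact: map_mxM. Qed.
Lemma cxD m n (A B : 'M[R]_(m,n)) : cx (A + B) = cx A + cx B.
Proof. exact: map_mxD. Qed.
Lemma cx_tr m n (A : 'M[R]_(m,n)) : cx A^T = (cx A)^T.
Proof. by rewrite /cx map_trmx. Qed.
End Cx.
Section Nil.
Variables (F : numFieldType) (m : nat).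

Definition Wm (x : 'cV[F]_m.+1) : 'M[F]_m.+1 := \matrix_(i, j) x i 0 ^+ j.
Definition Nm : 'M[F]_m.+1 := \matrix_(i, j) (if (j == i.+1 :> nat) then (j%:R : F) else 0).

Lemma Wm_unit (x : 'cV[F]_m.+1) : (forall i j : 'I_m.+1, i != j -> x i 0 != x j 0) -> Wm x \in unitmx.
Proof.
move=> Hd.
have -> : Wm x = (Vandermonde m.+1 x^T)^T by apply/matrixP => i j; rewrite !mxE.
rewrite unitmx_tr unitmxE det_Vandermonde unitfE.
apply/prodf_neq0 => i _; apply/prodf_neq0 => j ij; rewrite !mxE subr_eq0.
apply: Hd; apply/eqP => eji; by rewrite eji ltnn in ij.
Qed.

Lemma colW (x : 'cV[F]_m.+1) j : col j (Wm x) = xpow x j.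
Proof. by apply/matrixP => i k; rewrite !mxE. Qed.

Lemma DW (D : 'M[F]_m.+1) (x : 'cV[F]_m.+1) :
  (forall j, (j <= m)%N -> D *m xpow x j = j%:R *: xpow x j.-1) ->
  D *m Wm x = Wm x *m Nm.
Proof.
move=> HD; apply/matrixP => i j.
have -> : (D *m Wm x) i j = (D *m col j (Wm x)) i 0 by rewrite !mxE; apply: eq_bigr => k _; rewrite !mxE.
rewrite colW HD; last by rewrite -ltnS.
rewrite !mxE.
case: j => [[|j'] Hj] /=.
  by rewrite mul0r big1 // => k _; rewrite !mxE /= mulr0.
rewrite (bigD1 (inord j')) //= big1 ?addr0.
  by rewrite !mxE inordK ?(ltnW Hj) //= eqxx mulrC.
move=> k /negbTE kn; rewrite !mxE /=.
case: eqP => [ek|]; last by rewrite mulr0.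
have ek' : (j' = k)%N by case: ek.
suff ekk : k = inord j' by rewrite ekk eqxx in kn.
by apply/val_inj; rewrite /= inordK ?(ltnW Hj).
Qed.

Lemma Nc_entry (c : 'cV[F]_m.+1) (i : 'I_m.+1) :
  (Nm *m c) i 0 = if (i < m)%N then (i.+1)%:R * c (inord i.+1) 0 else 0.
Proof.
rewrite mxE; case: ifP => Him.
  rewrite (bigD1 (inord i.+1)) //= big1 ?addr0.
    by rewrite !mxE inordK // eqxx.
  move=> k /negbTE kn; rewrite !mxE; case: eqP => [ek|]; last by rewrite mul0r.
  suff ekk : k = inord i.+1 by rewrite ekk eqxx in kn.
  by apply/val_inj; rewrite /= inordK // -ek.
apply: big1 => k _; rewrite mxE; case: eqP => [ek|]; last by rewrite mul0r.
have := ltn_ord k; have := ltn_ord i; rewrite ek; move: Him; clear; lia.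
Qed.

Lemma nil_contra (D : 'M[F]_m.+1) (x : 'cV[F]_m.+1) (e : 'rV[F]_m.+1)
    (lam : F) (v : 'cV[F]_m.+1) :
  (forall j, (j <= m)%N -> D *m xpow x j = j%:R *: xpow x j.-1) ->
  e *m xpow x 0 = 1%:M ->
  (forall i j : 'I_m.+1, i != j -> x i 0 != x j 0) ->
  v != 0 -> D *m v = lam *: v -> e *m v = 0 -> False.
Proof.
move=> HD He Hd vn0 Dv ev.
set W := Wm x; have Wu := Wm_unit Hd.
set c := invmx W *m v.
have vWc : v = W *m c by rewrite /c mulmxA mulmxV // mul1mx.
have cn0 : c != 0 by apply: contraNneq vn0 => c0; rewrite vWc c0 mulmx0.
have Nc : Nm *m c = lam *: c.
  have : W *m (Nm *m c) = W *m (lam *: c).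
    by rewrite mulmxA -(DW HD) -mulmxA -vWc Dv vWc scalemxAr.
  by move/(congr1 (mulmx (invmx W))); rewrite !mulKmx.
have rel i : (i < m)%N -> (i.+1)%:R * c (inord i.+1) 0 = lam * c (inord i) 0.
  move=> him; have := congr1 (fun M : 'cV[F]_m.+1 => M (inord i) 0) Nc.
  by rewrite /= Nc_entry (inordK (ltnW him)) him => ->; rewrite [(lam *: c) _ _]mxE.
have relm : lam * c ord_max 0 = 0.
  have := congr1 (fun M : 'cV[F]_m.+1 => M ord_max 0) Nc.
  by rewrite /= Nc_entry /= ltnn mxE.
case: (eqVneq lam 0) => [l0 | ln0].
  have cz j : (0 < j)%N -> (j < m.+1)%N -> c (inord j) 0 = 0.
    case: j => // j _ hj; have := rel j hj; rewrite l0 mul0r => /eqP.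
    by rewrite mulf_eq0 pnatr_eq0 /= => /eqP.
  have c0 : c ord0 0 = 0.
    have : (e *m W *m c) 0 0 = 0 by rewrite -mulmxA -vWc ev mxE.
    rewrite mxE (bigD1 ord0) //= big1 ?addr0.
      have -> : (e *m W) 0 ord0 = (e *m xpow x 0) 0 0.
        by rewrite !mxE; apply: eq_bigr => k _; rewrite !mxE.
      by rewrite He mxE mul1r.
    move=> k kn0; have -> : k = inord k by apply/val_inj; rewrite /= inordK.
    by rewrite cz ?mulr0 // lt0n.
  move/negP: cn0; apply; apply/eqP/matrixP => i j; rewrite (ord1 j) [RHS]mxE.
  case: (eqVneq i ord0) => [-> // | in0].
  by rewrite -(inord_val i) cz // lt0n.
have cz k : (k <= m)%N -> c (inord (m - k)) 0 = 0.
  elim: k => [_ | k IH hk].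
    have -> : (inord (m - 0) : 'I_m.+1) = ord_max by apply/val_inj; rewrite /= subn0 inordK.
    by move/eqP: relm; rewrite mulf_eq0 (negbTE ln0) => /eqP.
  have := rel (m - k.+1)%N; rewrite (_ : (m - k.+1).+1 = m - k)%N; last by lia.
  rewrite IH ?(ltnW hk) // mulr0 => /(_ ltac:(lia)) /esym /eqP.
  by rewrite mulf_eq0 (negbTE ln0) => /eqP.
move/negP: cn0; apply; apply/eqP/matrixP => i j; rewrite (ord1 j) [RHS]mxE.
have -> : i = inord (m - (m - i)) by apply/val_inj; rewrite /= subKn ?inordK // -ltnS.
by rewrite cz // leq_subr.
Qed.
End Nil.

Lemma Qrank1 (R : realFieldType) k (p u : 'cV[R]_k) :
  (u^T *m (p *m p^T) *m u) 0 0 = (p^T *m u) 0 0 ^+ 2.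
Proof.
rewrite !mulmxA -mulmxA mxE big_ord1 expr2; congr (_ * _).
by rewrite -[u^T *m p]trmxK trmx_mul trmxK mxE.
Qed.

Theorem theorem3 (R : realType) (n : nat) (a b : R)
    (Dp Dm H S : 'M[R]_n.+1) (p0 pn x : 'cV[R]_n.+1) :
  a < b -> (1 <= n)%N ->
  SBP_pair a b n Dp Dm H S p0 pn x ->
  eigenvalue_property Dp H p0.
Proof.
move=> hab hn [HDx [Hsym Hpos] [Hsbp [Ssym Spsd]] _ Hdist] lam Heig.
set Mr := Dp + invmx H *m (p0 *m p0^T).
rewrite -complexRe ltcR ltNge; apply/negP => Hle.
have Hu : H \in unitmx.
  rewrite unitmxE unitfE; apply/negP => /det0P [w wn0 wH].
  have := Hpos w^T; rewrite trmx_eq0 wn0 trmxK wH mul0mx mxE ltxx.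
  by move/(_ isT).
have [v vn0 Mv] : exists2 v : 'cV[R[i]]_n.+1, v != 0 & cx Mr *m v = lam *: v.
  have cpT : char_poly (cx Mr)^T = char_poly (cx Mr).
    rewrite /char_poly -det_tr; congr (\det _).
    by rewrite /char_poly_mx linearB /= tr_scalar_mx map_trmx trmxK.
  move: Heig; rewrite complexifyE eigenvalue_root_char -cpT -eigenvalue_root_char.
  case/eigenvalueP => w wA wn0; exists w^T; first by rewrite trmx_eq0.
  by rewrite -(trmxK (cx Mr)) -trmx_mul wA linearZ.
set vr := map_mx (@complex.Re R) v; set vi := map_mx (@complex.Im R) v.
set al := complex.Re lam; set be := complex.Im lam.
have Mvr : Mr *m vr = al *: vr - be *: vi by rewrite -Re_mul Mv Re_scale.
have Mvi : Mr *m vi = be *: vr + al *: vi by rewrite -Im_mul Mv Im_scale.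
have HM : H *m Mr = H *m Dp + p0 *m p0^T by rewrite mulmxDr mulmxA mulmxV // mul1mx.
have HMT : Mr^T *m H = Dp^T *m H + p0 *m p0^T.
  rewrite linearD /= mulmxDl trmx_mul trmx_inv Hsym trmx_mul trmxK.
  by rewrite -[_ *m invmx H *m H]mulmxA mulVmx // mulmx1.
have Hsum : H *m Mr + Mr^T *m H = p0 *m p0^T + pn *m pn^T + S.
  rewrite HM HMT addrACA Hsbp; set b0 := p0 *m p0^T.
  by rewrite addrC !addrA addrK.
pose Q (A : 'M[R]_n.+1) (u : 'cV[R]_n.+1) := (u^T *m A *m u) 0 0.
have QD A B u : Q (A + B) u = Q A u + Q B u.
  by rewrite /Q mulmxDr mulmxDl mxE.
have Qsym u : Q (Mr^T *m H) u = Q (H *m Mr) u.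
  have E : (u^T *m (H *m Mr) *m u)^T = u^T *m (Mr^T *m H) *m u.
    by rewrite !trmx_mul trmxK Hsym !mulmxA.
  by rewrite /Q -E mxE.
have energy u : 2 * Q (H *m Mr) u = (p0^T *m u) 0 0 ^+ 2 + (pn^T *m u) 0 0 ^+ 2 + Q S u.
  by rewrite mulr2n mulrDl mul1r -{2}Qsym -QD Hsum !QD /Q !Qrank1.
pose B (u w : 'cV[R]_n.+1) := (u^T *m H *m w) 0 0.
have Bsym u w : B u w = B w u.
  have E : (w^T *m H *m u)^T = u^T *m H *m w by rewrite !trmx_mul trmxK Hsym mulmxA.
  by rewrite /B -E mxE.
have QHM u : Q (H *m Mr) u = (u^T *m H *m (Mr *m u)) 0 0 by rewrite /Q !mulmxA.
have Er : Q (H *m Mr) vr = al * B vr vr - be * B vr vi.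
  by rewrite /B QHM Mvr mulmxBr -!scalemxAr !mxE.
have Ei : Q (H *m Mr) vi = be * B vi vr + al * B vi vi.
  by rewrite /B QHM Mvi mulmxDr -!scalemxAr !mxE.
have QHge u : 0 <= B u u.
  case: (eqVneq u 0) => [->|un0]; first by rewrite /B mulmx0 mxE.
  by apply: ltW; rewrite /B -mulmxA mulmxA; apply: Hpos.
have Sge u : 0 <= Q S u by rewrite /Q; apply: Spsd.
have E1 := energy vr; have E2 := energy vi.
rewrite Er in E1; rewrite Ei Bsym in E2.
have hr := QHge vr; have hi := QHge vi.
have a1 : al * B vr vr <= 0 by rewrite mulr_le0_ge0.
have a2 : al * B vi vi <= 0 by rewrite mulr_le0_ge0.
have s1 := sqr_ge0 ((p0^T *m vr) 0 0); have s2 := sqr_ge0 ((p0^T *m vi) 0 0).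
have s3 := sqr_ge0 ((pn^T *m vr) 0 0); have s4 := sqr_ge0 ((pn^T *m vi) 0 0).
have s5 := Sge vr; have s6 := Sge vi.
have z1 : (p0^T *m vr) 0 0 ^+ 2 = 0 by lra.
have z2 : (p0^T *m vi) 0 0 ^+ 2 = 0 by lra.
have p0v : cx p0^T *m v = 0.
  apply: mx_eq0_ReIm; rewrite ?Re_mul ?Im_mul; apply/matrixP => i j;
    rewrite !ord1 [RHS]mxE; apply/eqP; rewrite -sqrf_eq0; apply/eqP; [exact: z1 | exact: z2].
have Dv : cx Dp *m v = lam *: v.
  by rewrite -Mv /Mr cxD mulmxA cxM mulmxDl -mulmxA p0v mulmx0 addr0.
have xp k : xpow (cx x) k = cx (xpow x k).
  by apply/matrixP => i l; rewrite !mxE rmorphXn.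
apply: (@nil_contra _ n (cx Dp) (cx x) (cx p0^T) lam v) => //.
- move=> j hj; rewrite !xp -cxM; case: (HDx j hj) => -> _ _ _.
  by rewrite /cx map_mxZ rmorph_nat.
- rewrite xp -cxM; case: (HDx 0%N isT) => _ _ -> _.
  by rewrite expr0 /cx map_scalar_mx rmorph1.
- by move=> i j ij; rewrite !mxE (inj_eq (@complexI R)) Hdist.
Qed.
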